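(* For every $j\ge0$, $$\left|\frac{\mathbb E(W_j)}{K}-\mathbb Q_j\right|\le \mathbb E\!\left(\min(pv_1,1)\,\frac{v_1}{V}\right).$$
   Context: Uniform urn model. Let $v$ be a random variable with values in the positive integers (number of balls of a given color), let $K\ge 1$, let $v_1,\dots,v_K$ be i.i.d. copies of $v$ and $V=v_1+\dots+v_K$. Fix a sampling fraction $p\in(0,1)$, with $pV$ assumed to be an integer. Conditionally on $\mathcal F=\{v_1,\dots,v_K\}$, $pV$ balls are drawn with replacement, independently, each drawn ball having color $i$ with probability $v_i/V$. Let $\tilde v_i$ be the number of drawn balls of color $i$, and for $j\ge0$ let $W_j=\sum_{i=1}^K\mathbf 1\{\tilde v_i=j\}$. Let $\mathbb Q_j=\mathbb E\big(\frac{(pv)^j}{j!}e^{-pv}\big)$, $j\ge0$. *)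

(* Defs.v *)
From Stdlib Require Import Reals Lra Lia List Arith ClassicalEpsilon.
Import ListNotations.
Open Scope R_scope.

(* Sum of a real series (the value l with infinite_sum u l, chosen classically).
   For the (bounded, nonnegative-weighted) series used below this is the usual sum. *)
Definition Series (u : nat -> R) : R :=
  epsilon (inhabits 0%R) (fun l => infinite_sum u l).

(* Law of v: q n = P(v = n). *)
Definition is_pos_int_law (q : nat -> R) : Prop :=
  (forall n, 0 <= q n) /\ q 0%nat = 0 /\ infinite_sum q 1.

(* Expectation of f(v_1,...,v_K) for i.i.d. v_i with law q
   (iterated sums over the product law). The list l = [v_1; ...; v_K]. *)
Fixpoint Eiid (q : nat -> R) (K : nat) (f : list nat -> R) : R :=
  match K with
  | O => f []
  | S k => Series (fun n => q n * Eiid q k (fun l => f (n :: l)))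
  end.

Fixpoint draws (K N : nat) : list (list nat) :=
  match N with
  | O => [[]]
  | S n => flat_map (fun s => map (fun c => c :: s) (seq 0 K)) (draws K n)
  end.

(* Probability of a given draw sequence, given F = l (colour i has v_{i+1} = nth i l 0 balls). *)
Definition draw_prob (l : list nat) (s : list nat) : R :=
  fold_right (fun c acc => (INR (nth c l 0%nat) / INR (list_sum l)) * acc) 1 s.

Definition tcount (s : list nat) (i : nat) : nat :=
  length (filter (Nat.eqb i) s).

Definition W (K : nat) (j : nat) (s : list nat) : nat :=
  length (filter (fun i => Nat.eqb (tcount s i) j) (seq 0 K)).

(* Number of draws pV (pV is assumed integer; Int_part recovers it). *)
Definition ndraws (p : R) (l : list nat) : nat :=
  Z.to_nat (Int_part (p * INR (list_sum l))).

(* E(W_j | F) for F = l. *)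
Definition EW_cond (p : R) (j : nat) (l : list nat) : R :=
  fold_right Rplus 0
    (map (fun s => draw_prob l s * INR (W (length l) j s))
         (draws (length l) (ndraws p l))).

Definition Qj (q : nat -> R) (p : R) (j : nat) : R :=
  Series (fun n => q n * ((p * INR n) ^ j / INR (fact j) * exp (- (p * INR n)))).

Definition rhs_integrand (p : R) (l : list nat) : R :=
  Rmin (p * INR (nth 0 l 0%nat)) 1 * (INR (nth 0 l 0%nat) / INR (list_sum l)).

(* Main.v *)
Require Import Defs.
From Stdlib Require Import Reals List Lra Lia Arith ZArith ClassicalEpsilon FunctionalExtensionality.
Import ListNotations.
Open Scope R_scope.

Lemma Rabs_le_inv x c : Rabs x <= c -> -c <= x <= c.
Proof. intro H. unfold Rabs in H. destruct (Rcase_abs x); lra. Qed.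

Lemma Series_eq u l : infinite_sum u l -> Series u = l.
Proof.
  intro H. unfold Series. apply (uniqueness_sum u). 2: exact H.
  apply epsilon_spec. exists l; exact H.
Qed.

Lemma Series_spec u : (exists l, infinite_sum u l) -> infinite_sum u (Series u).
Proof. intro H. unfold Series. apply epsilon_spec. exact H. Qed.

Lemma CV_const c : Un_cv (fun _ => c) c.
Proof. intros eps H; exists 0%nat; intros; unfold R_dist; rewrite Rminus_diag, Rabs_R0; lra. Qed.

Lemma psum_plus u v N : sum_f_R0 (fun n => u n + v n) N = sum_f_R0 u N + sum_f_R0 v N.
Proof. induction N; simpl; [lra| rewrite IHN; lra]. Qed.
Lemma psum_minus u v N : sum_f_R0 (fun n => u n - v n) N = sum_f_R0 u N - sum_f_R0 v N.
Proof. induction N; simpl; [lra| rewrite IHN; lra]. Qed.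
Lemma psum_scal u c N : sum_f_R0 (fun n => u n * c) N = sum_f_R0 u N * c.
Proof. induction N; simpl; [lra| rewrite IHN; lra]. Qed.
Lemma psum_ext u v N : (forall n, u n = v n) -> sum_f_R0 u N = sum_f_R0 v N.
Proof. intro H; induction N; simpl; rewrite ?IHN, H; lra. Qed.
Lemma psum_le u v N : (forall n, u n <= v n) -> sum_f_R0 u N <= sum_f_R0 v N.
Proof. intro H; induction N; simpl; [apply H| specialize (H (S N)); lra]. Qed.

Lemma isum_plus u v l1 l2 : infinite_sum u l1 -> infinite_sum v l2 ->
  infinite_sum (fun n => u n + v n) (l1 + l2).
Proof.
  intros H1 H2. assert (H := CV_plus _ _ _ _ H1 H2).
  intros eps Heps. destruct (H eps Heps) as [N HN]. exists N. intros n Hn.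
  rewrite psum_plus. apply HN; auto.
Qed.
Lemma isum_minus u v l1 l2 : infinite_sum u l1 -> infinite_sum v l2 ->
  infinite_sum (fun n => u n - v n) (l1 - l2).
Proof.
  intros H1 H2. assert (H := CV_minus _ _ _ _ H1 H2).
  intros eps Heps. destruct (H eps Heps) as [N HN]. exists N. intros n Hn.
  rewrite psum_minus. apply HN; auto.
Qed.
Lemma isum_scal u c l : infinite_sum u l -> infinite_sum (fun n => u n * c) (l * c).
Proof.
  intros H1. assert (H := CV_mult _ _ _ _ H1 (CV_const c)).
  intros eps Heps. destruct (H eps Heps) as [N HN]. exists N. intros n Hn.
  rewrite psum_scal. apply HN; auto.
Qed.
Lemma isum_ext u v l : (forall n, u n = v n) -> infinite_sum u l -> infinite_sum v l.
Proof.
  intros E H eps Heps. destruct (H eps Heps) as [N HN]. exists N. intros n Hn.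
  rewrite <- (psum_ext u v n E). apply HN; auto.
Qed.
Lemma isum_le u v l1 l2 : (forall n, u n <= v n) -> infinite_sum u l1 -> infinite_sum v l2 -> l1 <= l2.
Proof.
  intros E H1 H2. apply (@Rle_cv_lim (fun N => sum_f_R0 u N) (fun N => sum_f_R0 v N)); auto.
  intro; apply psum_le; auto.
Qed.

Section QSeries.
Variable q : nat -> R.
Hypothesis qpos : forall n, 0 <= q n.
Hypothesis q1 : infinite_sum q 1.

Definition bnd (a : nat -> R) := exists M, forall n, Rabs (a n) <= M.

Lemma q_partial_le1 N : sum_f_R0 q N <= 1.
Proof. apply (sum_incr q N 1 q1 qpos). Qed.

Lemma q_conv a : bnd a -> exists l, infinite_sum (fun n => q n * a n) l.
Proof.
  intros [M HM].
  assert (HB : {l | Un_cv (fun N => sum_f_R0 (fun n => q n * (2*M)) N) l}).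
  { exists (1 * (2*M)). apply isum_scal. exact q1. }
  destruct (Rseries_CV_comp (fun n => q n * (a n + M)) (fun n => q n * (2*M))) as [l Hl].
  { intro n. specialize (HM n). specialize (qpos n). apply Rabs_le_inv in HM. split; nra. }
  exact HB.
  exists (l - 1 * M).
  apply (isum_ext (fun n => q n * (a n + M) - q n * M)). intro; ring.
  apply isum_minus. exact Hl. apply isum_scal. exact q1.
Qed.

Definition EQ (a : nat -> R) := Series (fun n => q n * a n).

Lemma EQ_spec a : bnd a -> infinite_sum (fun n => q n * a n) (EQ a).
Proof. intro H. apply Series_spec. apply q_conv; auto. Qed.

Lemma bnd_plus a b : bnd a -> bnd b -> bnd (fun n => a n + b n).
Proof. intros [M1 H1] [M2 H2]; exists (M1+M2); intro n.
  eapply Rle_trans. apply Rabs_triang. specialize (H1 n); specialize (H2 n); lra. Qed.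
Lemma bnd_minus a b : bnd a -> bnd b -> bnd (fun n => a n - b n).
Proof. intros [M1 H1] [M2 H2]; exists (M1+M2); intro n.
  eapply Rle_trans. apply Rabs_triang. rewrite Rabs_Ropp. specialize (H1 n); specialize (H2 n); lra. Qed.
Lemma bnd_scal a c : bnd a -> bnd (fun n => c * a n).
Proof. intros [M1 H1]; exists (Rabs c * M1); intro n. rewrite Rabs_mult.
  apply Rmult_le_compat_l. apply Rabs_pos. apply H1. Qed.
Lemma bnd_const c : bnd (fun _ => c).
Proof. exists (Rabs c); intro; lra. Qed.

Lemma EQ_plus a b : bnd a -> bnd b -> EQ (fun n => a n + b n) = EQ a + EQ b.
Proof. intros Ha Hb. unfold EQ at 1. apply Series_eq.
  apply (isum_ext (fun n => q n * a n + q n * b n)). intro; ring.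
  apply isum_plus; apply EQ_spec; auto. Qed.
Lemma EQ_minus a b : bnd a -> bnd b -> EQ (fun n => a n - b n) = EQ a - EQ b.
Proof. intros Ha Hb. unfold EQ at 1. apply Series_eq.
  apply (isum_ext (fun n => q n * a n - q n * b n)). intro; ring.
  apply isum_minus; apply EQ_spec; auto. Qed.
Lemma EQ_scal a c : bnd a -> EQ (fun n => c * a n) = c * EQ a.
Proof. intros Ha. unfold EQ at 1. apply Series_eq.
  apply (isum_ext (fun n => (q n * a n) * c)). intro; ring.
  rewrite Rmult_comm. apply isum_scal; apply EQ_spec; auto. Qed.
Lemma EQ_const c : EQ (fun _ => c) = c.
Proof. unfold EQ. apply Series_eq. assert (H:=isum_scal q c 1 q1).
  rewrite Rmult_1_l in H. exact H. Qed.

Lemma EQ_le a b : bnd a -> bnd b -> (forall n, 0 < q n -> a n <= b n) -> EQ a <= EQ b.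
Proof. intros Ha Hb H. apply (isum_le (fun n => q n * a n) (fun n => q n * b n)).
  intro n. destruct (qpos n) as [Hq|Hq]. specialize (H n Hq); nra. rewrite <- Hq; lra.
  apply EQ_spec; auto. apply EQ_spec; auto. Qed.

Lemma EQ_ext a b : (forall n, 0 < q n -> a n = b n) -> EQ a = EQ b.
Proof. intro H. unfold EQ. f_equal. apply functional_extensionality. intro n.
  destruct (qpos n) as [Hq|Hq]. rewrite H; auto. rewrite <- Hq; ring. Qed.

Lemma EQ_abs a c : (forall n, Rabs (a n) <= c) -> Rabs (EQ a) <= c.
Proof. intro H. assert (Ha : bnd a) by (exists c; auto).
  apply Rabs_le. split.
  - rewrite <- (EQ_const (-c)). apply EQ_le; auto. apply bnd_const. intros n _.
    specialize (H n). apply Rabs_le_inv in H. lra.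
  - rewrite <- (EQ_const c) at 1. apply EQ_le; auto. apply bnd_const. intros n _.
    specialize (H n). apply Rabs_le_inv in H. lra.
Qed.


Lemma psum_abs_diff a M N n : (forall k, Rabs (a k) <= M) ->
  Rabs (sum_f_R0 (fun k => q k * a k) (n + N) - sum_f_R0 (fun k => q k * a k) N)
  <= M * (sum_f_R0 q (n + N) - sum_f_R0 q N).
Proof.
  intro H. induction n.
  - simpl. rewrite !Rminus_diag, Rabs_R0. lra.
  - replace (S n + N)%nat with (S (n + N)) by lia. simpl.
    specialize (H (S (n+N))). specialize (qpos (S (n+N))).
    eapply Rle_trans. 2: { apply Req_le. reflexivity. }
    replace (sum_f_R0 (fun k : nat => q k * a k) (n + N) + q (S (n + N)) * a (S (n + N)) -
      sum_f_R0 (fun k : nat => q k * a k) N) with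
      ((sum_f_R0 (fun k : nat => q k * a k) (n + N) - sum_f_R0 (fun k : nat => q k * a k) N)
        + q (S (n + N)) * a (S (n + N))) by ring.
    eapply Rle_trans. apply Rabs_triang. rewrite Rabs_mult, (Rabs_right (q _)) by lra.
    assert (q (S (n + N)) * Rabs (a (S (n + N))) <= q (S (n+N)) * M) by (apply Rmult_le_compat_l; lra).
    lra.
Qed.

Lemma EQ_tail a M N : (forall k, Rabs (a k) <= M) ->
  Rabs (EQ a - sum_f_R0 (fun k => q k * a k) N) <= M * (1 - sum_f_R0 q N).
Proof.
  intro H. assert (HM : 0 <= M) by (specialize (H 0%nat); pose proof (Rabs_pos (a 0%nat)); lra).
  assert (Hs : infinite_sum (fun n => q n * a n) (EQ a)) by (apply EQ_spec; exists M; auto).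
  assert (Hc := CV_shift' _ N _ Hs).
  assert (Hb : forall n, Rabs (sum_f_R0 (fun k => q k * a k) (n + N) - sum_f_R0 (fun k => q k * a k) N)
     <= M * (1 - sum_f_R0 q N)).
  { intro n. eapply Rle_trans. apply psum_abs_diff; auto. apply Rmult_le_compat_l; auto.
    pose proof (q_partial_le1 (n+N)). lra. }
  apply Rabs_le. split.
  - assert (X := @Rle_cv_lim (fun _ => sum_f_R0 (fun k => q k * a k) N - M * (1 - sum_f_R0 q N))
       (fun n => sum_f_R0 (fun k => q k * a k) (n + N)) _ _ (fun n => ltac:(pose proof (Rabs_le_inv _ _ (Hb n)); lra)) (CV_const _) Hc).
    simpl in X. lra.
  - assert (X := @Rle_cv_lim (fun n => sum_f_R0 (fun k => q k * a k) (n + N))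
       (fun _ => sum_f_R0 (fun k => q k * a k) N + M * (1 - sum_f_R0 q N))
        _ _ (fun n => ltac:(pose proof (Rabs_le_inv _ _ (Hb n)); lra)) Hc (CV_const _)).
    lra.
Qed.

Lemma psum_h_bound (h : nat -> nat -> R) M m N : (forall m n, Rabs (h m n) <= M) ->
  Rabs (sum_f_R0 (fun n => q n * h m n) N) <= M.
Proof.
  intro H. assert (HM : 0 <= M) by (specialize (H 0%nat 0%nat); pose proof (Rabs_pos (h 0%nat 0%nat)); lra).
  apply Rle_trans with (M * sum_f_R0 q N).
  2: { pose proof (q_partial_le1 N). nra. }
  induction N; simpl.
  - rewrite Rabs_mult, (Rabs_right (q 0%nat)) by (specialize (qpos 0%nat); lra).
    specialize (H m 0%nat); specialize (qpos 0%nat); nra.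
  - eapply Rle_trans. apply Rabs_triang.
    rewrite Rabs_mult, (Rabs_right (q (S N))) by (specialize (qpos (S N)); lra).
    specialize (H m (S N)); specialize (qpos (S N)); nra.
Qed.

Lemma EQ_psum (h : nat -> nat -> R) M N : (forall m n, Rabs (h m n) <= M) ->
  EQ (fun m => sum_f_R0 (fun n => q n * h m n) N) = sum_f_R0 (fun n => q n * EQ (fun m => h m n)) N.
Proof.
  intro H. induction N; simpl.
  - apply EQ_scal. exists M; intro; apply H.
  - rewrite EQ_plus. rewrite IHN. f_equal. apply EQ_scal. exists M; intro; apply H.
    exists M; intro; apply psum_h_bound; auto.
    apply bnd_scal. exists M; intro; apply H.
Qed.

Lemma EQ_fubini (h : nat -> nat -> R) M : (forall m n, Rabs (h m n) <= M) ->
  EQ (fun m => EQ (fun n => h m n)) = EQ (fun n => EQ (fun m => h m n)).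
Proof.
  intro H. assert (HM : 0 <= M) by (specialize (H 0%nat 0%nat); pose proof (Rabs_pos (h 0%nat 0%nat)); lra).
  set (s := fun N => sum_f_R0 (fun n => q n * EQ (fun m => h m n)) N).
  assert (HB : Un_cv s (EQ (fun n => EQ (fun m => h m n)))).
  { apply EQ_spec. exists M. intro n. apply EQ_abs. intro; apply H. }
  assert (HA : Un_cv s (EQ (fun m => EQ (fun n => h m n)))).
  { intros eps Heps.
    destruct (q1 (eps / (M + 1))) as [N0 HN0]. apply Rdiv_lt_0_compat; lra.
    exists N0. intros N HN. specialize (HN0 N HN). unfold R_dist in *.
    unfold s. rewrite <- EQ_psum with (M := M) by auto.
    rewrite <- EQ_minus.
    2: { exists M; intro; apply psum_h_bound; auto. }
    2: { exists M; intro m. apply EQ_abs. intro; apply H. }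
    eapply Rle_lt_trans. apply EQ_abs. intro m. rewrite Rabs_minus_sym. apply EQ_tail. intro; apply H.
    pose proof (q_partial_le1 N). rewrite Rabs_left1 in HN0 by lra.
    apply Rle_lt_trans with ((M+1) * (1 - sum_f_R0 q N)). nra.
    apply Rmult_lt_reg_l with (/ (M+1)). apply Rinv_0_lt_compat; lra.
    rewrite <- Rmult_assoc, Rinv_l by lra. unfold Rdiv in HN0. lra. }
  exact (UL_sequence _ _ _ HA HB).
Qed.

End QSeries.

Section EiidSec.
Variable q : nat -> R.
Hypothesis qpos : forall n, 0 <= q n.
Hypothesis q1 : infinite_sum q 1.

Definition lbnd (f : list nat -> R) M := forall l, Rabs (f l) <= M.

Lemma Eiid_S k f : Eiid q (S k) f = EQ q (fun n => Eiid q k (fun l => f (n :: l))).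
Proof. reflexivity. Qed.

Lemma Eiid_abs K : forall f M, lbnd f M -> Rabs (Eiid q K f) <= M.
Proof.
  induction K; intros f M H.
  - apply H.
  - rewrite Eiid_S. apply EQ_abs; auto. intro n. apply IHK. intro l; apply H.
Qed.

Lemma Eiid_bnd K f M : lbnd f M -> bnd (fun n => Eiid q K (fun l => f (n :: l))).
Proof. intro H. exists M. intro n. apply Eiid_abs. intro; apply H. Qed.

Lemma Eiid_plus K : forall f g M1 M2, lbnd f M1 -> lbnd g M2 ->
  Eiid q K (fun l => f l + g l) = Eiid q K f + Eiid q K g.
Proof.
  induction K; intros f g M1 M2 H1 H2.
  - reflexivity.
  - rewrite !Eiid_S.
    rewrite (functional_extensionality (fun n => Eiid q K (fun l => f (n :: l) + g (n :: l)))
      (fun n => Eiid q K (fun l => f (n :: l)) + Eiid q K (fun l => g (n :: l)))).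
    2: { intro n. apply (IHK _ _ M1 M2); intro l; auto. }
    apply EQ_plus; auto; eapply Eiid_bnd; eauto.
Qed.

Lemma Eiid_scal K : forall f c M, lbnd f M ->
  Eiid q K (fun l => c * f l) = c * Eiid q K f.
Proof.
  induction K; intros f c M H1.
  - reflexivity.
  - rewrite !Eiid_S.
    rewrite (functional_extensionality (fun n => Eiid q K (fun l => c * f (n :: l)))
      (fun n => c * Eiid q K (fun l => f (n :: l)))).
    2: { intro n. apply (IHK _ _ M); intro l; auto. }
    apply EQ_scal; auto; eapply Eiid_bnd; eauto.
Qed.

Lemma Eiid_const K c : Eiid q K (fun _ => c) = c.
Proof.
  induction K. reflexivity. rewrite Eiid_S.
  rewrite (functional_extensionality (fun n => Eiid q K (fun _ => c)) (fun _ => c)).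
  apply EQ_const; auto. intro; apply IHK.
Qed.

Lemma lbnd_plus f g M1 M2 : lbnd f M1 -> lbnd g M2 -> lbnd (fun l => f l + g l) (M1 + M2).
Proof. intros H1 H2 l. eapply Rle_trans. apply Rabs_triang. specialize (H1 l); specialize (H2 l); lra. Qed.
Lemma lbnd_scal f c M : lbnd f M -> lbnd (fun l => c * f l) (Rabs c * M).
Proof. intros H l. rewrite Rabs_mult. apply Rmult_le_compat_l. apply Rabs_pos. apply H. Qed.

Lemma Eiid_minus K f g M1 M2 : lbnd f M1 -> lbnd g M2 ->
  Eiid q K (fun l => f l - g l) = Eiid q K f - Eiid q K g.
Proof.
  intros H1 H2.
  rewrite (functional_extensionality (fun l => f l - g l) (fun l => f l + (-1) * g l)) by (intro; ring).
  rewrite (Eiid_plus K f _ M1 (Rabs (-1) * M2)); auto.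
  rewrite (Eiid_scal K g (-1) M2); auto. ring. apply lbnd_scal; auto.
Qed.

Definition supp K (l : list nat) := length l = K /\ Forall (fun n => 0 < q n) l.

Lemma Eiid_le K : forall f g M1 M2, lbnd f M1 -> lbnd g M2 ->
  (forall l, supp K l -> f l <= g l) -> Eiid q K f <= Eiid q K g.
Proof.
  induction K; intros f g M1 M2 H1 H2 H.
  - apply H. split; auto.
  - rewrite !Eiid_S. apply EQ_le; auto. eapply Eiid_bnd; eauto. eapply Eiid_bnd; eauto.
    intros n Hn. apply (IHK _ _ M1 M2). intro; apply H1. intro; apply H2.
    intros l [Hl1 Hl2]. apply H. split. simpl; auto. constructor; auto.
Qed.

Lemma Eiid_ext K : forall f g, (forall l, supp K l -> f l = g l) -> Eiid q K f = Eiid q K g.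
Proof.
  induction K; intros f g H.
  - apply H. split; auto.
  - rewrite !Eiid_S. apply EQ_ext; auto.
    intros n Hn. apply IHK.
    intros l [Hl1 Hl2]. apply H. split. simpl; auto. constructor; auto.
Qed.

Lemma Eiid_ext_len K : forall f g, (forall l, length l = K -> f l = g l) -> Eiid q K f = Eiid q K g.
Proof. intros f g H. apply Eiid_ext. intros l [Hl _]. auto. Qed.

Fixpoint swap_at (d : nat) (l : list nat) : list nat :=
  match d, l with
  | O, a :: b :: r => b :: a :: r
  | O, _ => l
  | S d', a :: r => a :: swap_at d' r
  | S _, [] => []
  end.

Lemma Eiid_swap d : forall K f M, lbnd f M -> Eiid q K (fun l => f (swap_at d l)) = Eiid q K f.
Proof.
  induction d; intros K f M H.
  - destruct K as [|[|k]]; try reflexivity.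
    rewrite !Eiid_S.
    apply (EQ_fubini q qpos q1 (fun n m => Eiid q k (fun r => f (m :: n :: r))) M).
    intros; apply Eiid_abs; intro; apply H.
  - destruct K as [|k]; try reflexivity.
    rewrite !Eiid_S. f_equal. apply functional_extensionality; intro n.
    apply (IHd k (fun l => f (n :: l)) M). intro; apply H.
Qed.

Lemma nth_swap_at i : forall l, (S i < length l)%nat -> nth (S i) (swap_at i l) 0%nat = nth i l 0%nat.
Proof.
  induction i; intros l H.
  - destruct l as [|a [|b r]]; simpl in *; try lia; reflexivity.
  - destruct l as [|a r]; simpl in *; try lia. apply IHi. lia.
Qed.

Lemma sum_swap_at i : forall l, list_sum (swap_at i l) = list_sum l.
Proof.
  induction i; intros l.
  - destruct l as [|a [|b r]]; simpl; try reflexivity. lia.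
  - destruct l as [|a r]; simpl; auto.
Qed.

Lemma nth_le_sum : forall l i, (nth i l 0 <= list_sum l)%nat.
Proof.
  induction l; intros i; destruct i; simpl; try lia. specialize (IHl i); lia.
Qed.

Lemma Eiid_sym (G : nat -> nat -> R) M K :
  (forall a s, (a <= s)%nat -> Rabs (G a s) <= M) ->
  forall i, (i < K)%nat ->
  Eiid q K (fun l => G (nth i l 0%nat) (list_sum l)) = Eiid q K (fun l => G (nth 0 l 0%nat) (list_sum l)).
Proof.
  intros HG i. induction i; intro Hi. reflexivity.
  rewrite <- IHi by lia.
  rewrite <- (Eiid_swap i K _ M).
  - apply Eiid_ext_len. intros l Hl. rewrite nth_swap_at by lia. rewrite sum_swap_at. reflexivity.
  - intro l. apply HG. apply nth_le_sum.
Qed.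

Lemma Eiid_marg (h : nat -> R) M : (forall n, Rabs (h n) <= M) ->
  forall K i, (i < K)%nat -> Eiid q K (fun l => h (nth i l 0%nat)) = EQ q h.
Proof.
  intros Hh K. induction K; intros i Hi. lia.
  rewrite Eiid_S. destruct i.
  - f_equal. apply functional_extensionality; intro n. simpl. apply Eiid_const.
  - rewrite (functional_extensionality (fun n => Eiid q K (fun l => h (nth (S i) (n :: l) 0%nat)))
      (fun _ => EQ q h)). apply EQ_const; auto.
    intro n. simpl. apply IHK. lia.
Qed.

End EiidSec.

Fixpoint ssum (f : nat -> R) (n : nat) : R :=
  match n with O => 0 | S n' => ssum f n' + f n' end.

Lemma ssum_ext f g n : (forall i, (i < n)%nat -> f i = g i) -> ssum f n = ssum g n.
Proof. induction n; intro H; simpl; auto. rewrite IHn, H; auto. Qed.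
Lemma ssum_plus f g n : ssum (fun i => f i + g i) n = ssum f n + ssum g n.
Proof. induction n; simpl; [lra| rewrite IHn; lra]. Qed.
Lemma ssum_scal f c n : ssum (fun i => c * f i) n = c * ssum f n.
Proof. induction n; simpl; [lra| rewrite IHn; lra]. Qed.
Lemma ssum_const c n : ssum (fun _ => c) n = INR n * c.
Proof. induction n; simpl ssum; [simpl; lra| rewrite IHn, S_INR; lra]. Qed.
Lemma ssum_shift f n : ssum f (S n) = f 0%nat + ssum (fun i => f (S i)) n.
Proof. induction n. simpl; lra. simpl ssum in *. rewrite IHn. lra. Qed.
Lemma ssum_abs f n : Rabs (ssum f n) <= ssum (fun i => Rabs (f i)) n.
Proof. induction n; simpl. rewrite Rabs_R0; lra. eapply Rle_trans. apply Rabs_triang. lra. Qed.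
Lemma ssum_le f g n : (forall i, (i < n)%nat -> f i <= g i) -> ssum f n <= ssum g n.
Proof. induction n; intro H; simpl. lra. assert (f n <= g n) by (apply H; lia).
  assert (ssum f n <= ssum g n) by (apply IHn; intros; apply H; lia). lra. Qed.

Definition indb (b : bool) : R := if b then 1 else 0.

Lemma ssum_if f g i n : (i < n)%nat ->
  ssum (fun c => if Nat.eqb i c then f c else g c) n = ssum g n - g i + f i.
Proof.
  induction n; intro H. lia. simpl.
  destruct (Nat.eq_dec i n) as [->|Hne].
  - rewrite Nat.eqb_refl.
    rewrite (ssum_ext _ g). lra. intros k Hk. destruct (Nat.eqb_spec n k); [lia|auto].
  - rewrite IHn by lia. destruct (Nat.eqb_spec i n); [lia|]. lra.
Qed.

Lemma Eiid_ssum q (qpos : forall n, 0 <= q n) (q1 : infinite_sum q 1) K (F : nat -> list nat -> R) M :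
  (forall i, lbnd (F i) M) -> forall n,
  Eiid q K (fun l => ssum (fun i => F i l) n) = ssum (fun i => Eiid q K (F i)) n.
Proof.
  intros HF n. induction n; simpl.
  - apply Eiid_const; auto.
  - rewrite (Eiid_plus q qpos q1 K _ _ (INR n * M) M); auto. rewrite IHn; auto.
    intro l. eapply Rle_trans. apply ssum_abs. rewrite <- ssum_const. apply ssum_le.
    intros; apply HF.
Qed.

Definition sumL {A} (f : A -> R) (xs : list A) : R := fold_right Rplus 0 (map f xs).

Lemma sumL_app {A} (f : A -> R) xs ys : sumL f (xs ++ ys) = sumL f xs + sumL f ys.
Proof. induction xs; unfold sumL in *; simpl. lra. rewrite IHxs; lra. Qed.
Lemma sumL_flat_map {A B} (f : B -> R) (g : A -> list B) xs :
  sumL f (flat_map g xs) = sumL (fun x => sumL f (g x)) xs.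
Proof. induction xs; simpl. reflexivity. rewrite sumL_app, IHxs. unfold sumL; simpl; lra. Qed.
Lemma sumL_map {A B} (f : B -> R) (g : A -> B) xs : sumL f (map g xs) = sumL (fun x => f (g x)) xs.
Proof. unfold sumL. rewrite map_map. reflexivity. Qed.
Lemma sumL_seq f K : sumL f (seq 0 K) = ssum f K.
Proof. induction K. reflexivity. rewrite seq_S, sumL_app, IHK. unfold sumL; simpl; lra. Qed.
Lemma sumL_lin {A} (f g : A -> R) a b xs :
  sumL (fun s => a * f s + b * g s) xs = a * sumL f xs + b * sumL g xs.
Proof. induction xs; unfold sumL in *; simpl. lra. rewrite IHxs; lra. Qed.
Lemma sumL_ext {A} (f g : A -> R) xs : (forall x, f x = g x) -> sumL f xs = sumL g xs.
Proof. intro H. unfold sumL. f_equal. apply map_ext. auto. Qed.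
Lemma sumL_ssum {A} (a : A -> R) (b : nat -> A -> R) K xs :
  sumL (fun s => a s * ssum (fun i => b i s) K) xs = ssum (fun i => sumL (fun s => a s * b i s) xs) K.
Proof.
  induction xs; unfold sumL in *; simpl.
  - induction K; simpl; lra.
  - rewrite IHxs. rewrite <- ssum_scal, <- ssum_plus. apply ssum_ext. intros; simpl; lra.
Qed.

Lemma INR_filter_seq (P : nat -> bool) K :
  INR (length (filter P (seq 0 K))) = ssum (fun i => indb (P i)) K.
Proof.
  induction K. reflexivity. rewrite seq_S, filter_app, length_app, plus_INR, IHK. simpl.
  unfold indb. destruct (P K); simpl; lra.
Qed.

Fixpoint Bin (pi : R) (n j : nat) : R :=
  match n with
  | O => if Nat.eqb j 0 then 1 else 0
  | S n' => match j with
            | O => (1 - pi) * Bin pi n' 0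
            | S j' => pi * Bin pi n' j' + (1 - pi) * Bin pi n' (S j')
            end
  end.

Section Draws.
Variable l : list nat.
Let K := length l.
Let pi c := INR (nth c l 0%nat) / INR (list_sum l).
Hypothesis hpi : ssum pi K = 1.

Lemma tcount_cons c s i : tcount (c :: s) i = if Nat.eqb i c then S (tcount s i) else tcount s i.
Proof. unfold tcount; simpl. destruct (Nat.eqb i c); reflexivity. Qed.

Lemma draws_marg i : (i < K)%nat -> forall n j,
  sumL (fun s => draw_prob l s * indb (Nat.eqb (tcount s i) j)) (draws K n) = Bin (pi i) n j.
Proof.
  intros Hi n. induction n; intro j.
  - unfold sumL; simpl. unfold indb, tcount; simpl. rewrite Nat.eqb_sym. unfold draw_prob; simpl. destruct (Nat.eqb j 0); lra.
  - simpl draws. rewrite sumL_flat_map.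
    rewrite (sumL_ext _ (fun s => pi i * (draw_prob l s * indb (Nat.eqb (S (tcount s i)) j))
                + (1 - pi i) * (draw_prob l s * indb (Nat.eqb (tcount s i) j)))).
    2: { intro s. rewrite sumL_map, sumL_seq.
         rewrite (ssum_ext _ (fun c => if Nat.eqb i c then
                 pi c * (draw_prob l s * indb (Nat.eqb (S (tcount s i)) j))
                 else pi c * (draw_prob l s * indb (Nat.eqb (tcount s i) j)))).
         2: { intros c _. unfold draw_prob at 1. simpl fold_right. rewrite tcount_cons.
              fold (draw_prob l s). unfold pi.
              destruct (Nat.eqb i c); simpl; lra. }
         rewrite ssum_if by auto.
         rewrite (ssum_ext (fun c => pi c * (draw_prob l s * indb (Nat.eqb (tcount s i) j)))
            (fun c => (draw_prob l s * indb (Nat.eqb (tcount s i) j)) * pi c)) by (intros; ring).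
         rewrite (ssum_scal pi), hpi. lra. }
    rewrite sumL_lin. rewrite IHn.
    destruct j.
    + rewrite (sumL_ext _ (fun s => 0 * draw_prob l s + 0 * draw_prob l s)) by (intro; unfold indb; simpl; ring).
      rewrite sumL_lin. simpl. ring.
    + simpl Bin. rewrite <- (IHn j). reflexivity.
Qed.

End Draws.

Lemma ssum_nth l : ssum (fun c => INR (nth c l 0%nat)) (length l) = INR (list_sum l).
Proof.
  induction l. reflexivity. simpl length. rewrite ssum_shift. simpl nth. rewrite IHl.
  simpl list_sum. rewrite plus_INR. ring.
Qed.

Lemma hpi_lemma l : (0 < list_sum l)%nat ->
  ssum (fun c => INR (nth c l 0%nat) / INR (list_sum l)) (length l) = 1.
Proof.
  intro H. rewrite (ssum_ext _ (fun c => / INR (list_sum l) * INR (nth c l 0%nat))) by (intros; unfold Rdiv; ring).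
  rewrite ssum_scal, ssum_nth. apply Rinv_l. apply not_0_INR. lia.
Qed.

Lemma EW_cond_Bin p j l : (0 < list_sum l)%nat ->
  EW_cond p j l = ssum (fun i => Bin (INR (nth i l 0%nat) / INR (list_sum l)) (ndraws p l) j) (length l).
Proof.
  intro H. unfold EW_cond. fold (sumL (fun s => draw_prob l s * INR (W (length l) j s)) (draws (length l) (ndraws p l))).
  rewrite (sumL_ext _ (fun s => draw_prob l s * ssum (fun i => indb (Nat.eqb (tcount s i) j)) (length l))).
  2: { intro s. unfold W. rewrite INR_filter_seq. reflexivity. }
  rewrite sumL_ssum. apply ssum_ext. intros i Hi. apply draws_marg; auto. apply hpi_lemma; auto.
Qed.

Section BinFacts.
Variable pi : R.
Hypothesis hpi : 0 <= pi <= 1.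

Lemma Bin_range n : forall k, 0 <= Bin pi n k <= 1.
Proof.
  induction n; intro k; simpl.
  - destruct (Nat.eqb k 0); lra.
  - destruct k.
    + specialize (IHn 0%nat). split; nra.
    + pose proof (IHn k); pose proof (IHn (S k)). split; nra.
Qed.

Lemma Bin_zero n : forall k, (n < k)%nat -> Bin pi n k = 0.
Proof.
  induction n; intros k Hk; simpl.
  - destruct k. lia. reflexivity.
  - destruct k. lia. rewrite !IHn by lia. ring.
Qed.

Lemma BinS0 n : Bin pi (S n) 0 = (1 - pi) * Bin pi n 0.
Proof. reflexivity. Qed.
Lemma BinSS n k : Bin pi (S n) (S k) = pi * Bin pi n k + (1 - pi) * Bin pi n (S k).
Proof. reflexivity. Qed.

Lemma Bin_mul n : forall k, INR (S k) * Bin pi (S n) (S k) = INR (S n) * pi * Bin pi n k.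
Proof.
  induction n; intro k.
  - rewrite BinSS. destruct k; simpl; [ring|]. destruct k; simpl; ring.
  - rewrite (BinSS (S n) k). destruct k.
    + assert (Hx : Bin pi (S n) 1 = INR (S n) * pi * Bin pi n 0).
      { rewrite <- (IHn 0%nat). simpl INR. ring. }
      rewrite Hx, BinS0. rewrite (S_INR (S n)). simpl INR. ring.
    + pose proof (IHn k) as H1. pose proof (IHn (S k)) as H2.
      replace (INR (S (S k)) * (pi * Bin pi (S n) (S k) + (1 - pi) * Bin pi (S n) (S (S k))))
        with (pi * (INR (S k) * Bin pi (S n) (S k)) + pi * Bin pi (S n) (S k)
              + (1 - pi) * (INR (S (S k)) * Bin pi (S n) (S (S k)))) by (rewrite (S_INR (S k)); ring).
      rewrite H1, H2, (BinSS n k). rewrite (S_INR (S n)). ring.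
Qed.

Lemma Bin_sum n : forall M, (n < M)%nat -> ssum (Bin pi n) M = 1.
Proof.
  induction n; intros M HM.
  - destruct M. lia. rewrite ssum_shift.
    rewrite (ssum_ext (fun i => Bin pi 0 (S i)) (fun _ => 0)) by (intros; reflexivity).
    rewrite ssum_const. simpl. ring.
  - destruct M. lia. rewrite ssum_shift.
    change (Bin pi (S n) 0) with ((1-pi) * Bin pi n 0).
    rewrite (ssum_ext _ (fun k => pi * Bin pi n k + (1 - pi) * Bin pi n (S k))) by (intros; reflexivity).
    rewrite ssum_plus, !ssum_scal. rewrite IHn by lia.
    assert (H2 : ssum (Bin pi n) (S M) = 1) by (apply IHn; lia).
    rewrite ssum_shift in H2. nra.
Qed.

Lemma ssum_ind_gen (a : nat -> R) j M :
  ssum (fun k => a k * indb (Nat.eqb k j)) M = if Nat.ltb j M then a j else 0.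
Proof.
  induction M; simpl. reflexivity. rewrite IHM.
  destruct (Nat.eqb_spec M j) as [->|Hne].
  - replace (Nat.ltb j j) with false by (symmetry; apply Nat.ltb_irrefl).
    replace (Nat.ltb j (S j)) with true by (symmetry; apply Nat.ltb_lt; lia). unfold indb; ring.
  - unfold indb. rewrite Rmult_0_r, Rplus_0_r.
    destruct (Nat.ltb_spec j M); destruct (Nat.ltb_spec j (S M)); try reflexivity; lia.
Qed.

Lemma ssum_ind_pick (a : nat -> R) M j : (forall k, (M <= k)%nat -> a k = 0) ->
  ssum (fun k => a k * indb (Nat.eqb k j)) M = a j.
Proof.
  intro H. rewrite ssum_ind_gen. destruct (Nat.ltb_spec j M). reflexivity. rewrite H; auto.
Qed.

Lemma Stein_Bin (g : nat -> R) n :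
  ssum (fun k => Bin pi (S n) k * (INR k * g k - INR (S n) * pi * g (S k))) (S (S n))
  = INR (S n) * pi ^ 2 * ssum (fun k => Bin pi n k * (g (S k) - g (S (S k)))) (S n).
Proof.
  set (N1 := INR (S n)).
  assert (T1 : ssum (fun k => Bin pi (S n) k * INR k * g k) (S (S n))
               = N1 * pi * ssum (fun k => Bin pi n k * g (S k)) (S n)).
  { rewrite ssum_shift. simpl INR at 1. rewrite Rmult_0_r, Rmult_0_l, Rplus_0_l.
    rewrite <- ssum_scal. apply ssum_ext. intros k _.
    replace (Bin pi (S n) (S k) * INR (S k) * g (S k)) with ((INR (S k) * Bin pi (S n) (S k)) * g (S k)) by ring.
    rewrite Bin_mul. unfold N1. ring. }
  assert (A1 : ssum (fun k => Bin pi n k * g (S k)) (S n)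
     = Bin pi n 0 * g 1%nat + ssum (fun k => Bin pi n (S k) * g (S (S k))) n).
  { rewrite ssum_shift. reflexivity. }
  assert (A2 : ssum (fun k => Bin pi n (S k) * g (S (S k))) (S n)
     = ssum (fun k => Bin pi n (S k) * g (S (S k))) n).
  { simpl ssum at 1. rewrite Bin_zero by lia. ring. }
  assert (T2 : ssum (fun k => Bin pi (S n) k * g (S k)) (S (S n))
     = pi * ssum (fun k => Bin pi n k * g (S (S k))) (S n)
       + (1 - pi) * ssum (fun k => Bin pi n k * g (S k)) (S n)).
  { rewrite ssum_shift. rewrite BinS0.
    rewrite (ssum_ext (fun i => Bin pi (S n) (S i) * g (S (S i)))
       (fun i => pi * (Bin pi n i * g (S (S i))) + (1 - pi) * (Bin pi n (S i) * g (S (S i)))))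
       by (intros; rewrite BinSS; ring).
    rewrite ssum_plus, !ssum_scal. rewrite A2, A1. ring. }
  replace (ssum (fun k => Bin pi (S n) k * (INR k * g k - N1 * pi * g (S k))) (S (S n)))
    with (ssum (fun k => Bin pi (S n) k * INR k * g k) (S (S n)) + (- (N1 * pi)) * ssum (fun k => Bin pi (S n) k * g (S k)) (S (S n))).
  2: { rewrite <- ssum_scal, <- ssum_plus. apply ssum_ext. intros. unfold N1. ring. }
  rewrite T1, T2.
  replace (ssum (fun k => Bin pi n k * (g (S k) - g (S (S k)))) (S n)) with
    (ssum (fun k => Bin pi n k * g (S k)) (S n) + (-1) * ssum (fun k => Bin pi n k * g (S (S k))) (S n)).
  2: { rewrite <- ssum_scal, <- ssum_plus. apply ssum_ext. intros. ring. }
  fold N1. ring.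
Qed.

End BinFacts.

Lemma stein_alg (w lam r s E : R) :
  0 < w -> 0 < lam -> 0 < r -> 0 <= s ->
  lam * s <= r * (s + w * lam / r - 1) ->
  (r - lam) * (E - s) <= lam * w ->
  s + w * lam / r <= E ->
  let um := w * lam / r in
  let P := (s + um) / um - s / w in
  let Q := (E - s) / w - (E - s - um) / um in
  0 <= P /\ 0 <= Q /\ 0 <= (E - s - um) * P /\ 0 <= s * Q /\
  (E - s - um) * P + s * Q <= E - 1.
Proof.
  intros Hw Hl Hr Hs H1 H2 H3 um P Q.
  assert (Hum : 0 < um) by (unfold um; apply Rdiv_lt_0_compat; nra).
  assert (HP : P = (r * s - lam * s + w * lam) / (w * lam)).
  { unfold P, um. field. lra. }
  assert (HQ : Q = (lam * w - (r - lam) * (E - s)) / (w * lam)).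
  { unfold Q, um. field. lra. }
  assert (P0 : 0 <= P).
  { rewrite HP. apply Rmult_le_pos. 2: left; apply Rinv_0_lt_compat; nra.
    assert (r * (s + w * lam / r - 1) = r * s + w * lam - r) by (field; lra). nra. }
  assert (Q0 : 0 <= Q).
  { rewrite HQ. apply Rmult_le_pos. lra. left; apply Rinv_0_lt_compat; nra. }
  assert (XY : (E - s - um) * P + s * Q = E - s - um + s * lam / r).
  { unfold P, Q, um. field. lra. }
  assert (Hsl : s * lam / r <= s + um - 1).
  { unfold um. apply Rmult_le_reg_l with r; auto.
    replace (r * (s * lam / r)) with (lam * s) by (field; lra). lra. }
  repeat split; auto.
  - apply Rmult_le_pos; auto. unfold um; lra.
  - apply Rmult_le_pos; auto.
  - rewrite XY. lra.
Qed.

Section Pois.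
Variable lam : R.
Hypothesis Hlam : 0 < lam.
Variable j : nat.

Definition u (i : nat) : R := lam ^ i / INR (fact i).
Definition Sp (m : nat) : R := sum_f_R0 u m.
Let E := exp lam.

Lemma u_pos i : 0 < u i.
Proof. unfold u. apply Rdiv_lt_0_compat. apply pow_lt; auto. apply INR_fact_lt_0. Qed.
Lemma u_0 : u 0 = 1.
Proof. unfold u; simpl; lra. Qed.
Lemma u_S i : u (S i) = u i * lam / INR (S i).
Proof.
  unfold u. change (fact (S i)) with (S i * fact i)%nat. rewrite mult_INR. simpl pow.
  field. split. apply INR_fact_neq_0. apply not_0_INR; lia.
Qed.

Lemma exp_isum : infinite_sum u E.
Proof.
  unfold E, exp. destruct (exist_exp lam) as [l Hl]. simpl.
  apply (isum_ext (fun i => / INR (fact i) * lam ^ i)). intro; unfold u, Rdiv; ring. exact Hl.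
Qed.

Lemma Sp_le_E m : Sp m <= E.
Proof. apply (sum_incr u m E exp_isum). intro; left; apply u_pos. Qed.

Lemma Sp_ge1 m : 1 <= Sp m.
Proof. induction m; unfold Sp in *; simpl. rewrite u_0; lra. pose proof (u_pos (S m)); lra. Qed.

Lemma Sp_add m : forall k, Sp m + u (S (k + m)) <= Sp (S (k + m)).
Proof.
  induction k; unfold Sp in *; simpl. lra.
  pose proof (u_pos (S (k+m))). simpl in IHk. lra.
Qed.

Lemma u_le_tail m i : (m < i)%nat -> u i <= E - Sp m.
Proof.
  intro H. destruct i. lia. replace i with ((i - m) + m)%nat by lia.
  pose proof (Sp_add m (i - m)). pose proof (Sp_le_E (S (i - m + m))). lra.
Qed.

Lemma u_le_Sp m i : (i <= m)%nat -> u i <= Sp m.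
Proof.
  intro H. induction m.
  - replace i with 0%nat by lia. unfold Sp; simpl; lra.
  - destruct (Nat.eq_dec i (S m)) as [->|Hne].
    + unfold Sp; simpl. pose proof (Sp_ge1 m). unfold Sp in H0. lra.
    + unfold Sp in *; simpl. pose proof (u_pos (S m)). specialize (IHm ltac:(lia)). lra.
Qed.

Lemma L1 n : lam * Sp n <= INR (S n) * (Sp (S n) - 1).
Proof.
  induction n.
  - unfold Sp; simpl. rewrite u_S, u_0. simpl INR. lra.
  - assert (Hs : Sp (S (S n)) = Sp (S n) + u (S (S n))) by reflexivity.
    assert (Hs2 : Sp (S n) = Sp n + u (S n)) by reflexivity.
    assert (Hu : INR (S (S n)) * u (S (S n)) = lam * u (S n)).
    { rewrite u_S. field. apply not_0_INR; lia. }
    pose proof (Sp_ge1 (S n)).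
    rewrite Hs, Hs2. rewrite Hs2 in IHn.
    assert (INR (S n) * (Sp n + u (S n) - 1) <= INR (S (S n)) * (Sp n + u (S n) - 1)).
    { apply Rmult_le_compat_r. lra. apply le_INR; lia. }
    nra.
Qed.

Lemma tail_fin m k : (INR m + 1 - lam) * (Sp (k + m) - Sp m) <= lam * u m.
Proof.
  assert (I : forall k, (INR m + 1) * (Sp (k + m) - Sp m) <= lam * (Sp (k + m) - Sp m - u (k + m) + u m)).
  { induction k0.
    - simpl. lra.
    - assert (Hs : Sp (S (k0 + m)) = Sp (k0 + m) + u (S (k0 + m))) by reflexivity.
      assert (Hu : INR (S (k0 + m)) * u (S (k0 + m)) = lam * u (k0 + m)).
      { rewrite u_S. field. apply not_0_INR; lia. }
      assert (Hle : (INR m + 1) * u (S (k0+m)) <= INR (S (k0 + m)) * u (S (k0 + m))).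
      { apply Rmult_le_compat_r. left; apply u_pos. rewrite <- S_INR. apply le_INR; lia. }
      change (S k0 + m)%nat with (S (k0 + m)). rewrite Hs. nra. }
  specialize (I k). pose proof (u_pos (k + m)). nra.
Qed.

Lemma tail m : (INR m + 1 - lam) * (E - Sp m) <= lam * u m.
Proof.
  assert (Hc := CV_shift' _ m _ exp_isum).
  assert (Hc2 := CV_mult _ _ _ _ (CV_const (INR m + 1 - lam)) (CV_minus _ _ _ _ Hc (CV_const (Sp m)))).
  apply (@Rle_cv_lim _ (fun _ => lam * u m) _ _ (fun k => tail_fin m k) Hc2 (CV_const _)).
Qed.

Definition g (k : nat) : R :=
  match k with
  | O => 0
  | S k' => u j * (indb (Nat.leb j k') * E - Sp k') / (lam * u k' * E)
  end.

Lemma E_pos : 0 < E.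
Proof. apply exp_pos. Qed.

Lemma stein_eq k : INR k * g k - lam * g (S k) = u j / E - indb (Nat.eqb k j).
Proof.
  pose proof E_pos. destruct k.
  - simpl g. unfold Sp; simpl sum_f_R0. rewrite u_0. simpl INR.
    destruct j; simpl indb; unfold indb; simpl.
    + rewrite u_0. field. lra.
    + field. lra.
  - unfold g. assert (HSp : Sp (S k) = Sp k + u (S k)) by reflexivity. rewrite HSp.
    pose proof (u_pos k). pose proof (u_pos (S k)).
    assert (HINR : INR (S k) <> 0) by (apply not_0_INR; lia).
    destruct (lt_eq_lt_dec j k) as [[Hjk|Hjk]|Hjk].
    + replace (Nat.leb j k) with true by (symmetry; apply Nat.leb_le; lia).
      replace (Nat.leb j (S k)) with true by (symmetry; apply Nat.leb_le; lia).
      replace (Nat.eqb (S k) j) with false by (symmetry; apply Nat.eqb_neq; lia).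
      unfold indb. rewrite (u_S k). field. repeat split; lra.
    + subst j. replace (Nat.leb k k) with true by (symmetry; apply Nat.leb_le; lia).
      replace (Nat.leb k (S k)) with true by (symmetry; apply Nat.leb_le; lia).
      replace (Nat.eqb (S k) k) with false by (symmetry; apply Nat.eqb_neq; lia).
      unfold indb. rewrite (u_S k). field. repeat split; lra.
    + destruct (Nat.eq_dec j (S k)) as [->|Hne].
      * replace (Nat.leb (S k) k) with false by (symmetry; apply Nat.leb_gt; lia).
        rewrite Nat.leb_refl, Nat.eqb_refl.
        unfold indb. rewrite (u_S k). field. repeat split; lra.
      * replace (Nat.leb j k) with false by (symmetry; apply Nat.leb_gt; lia).
        replace (Nat.leb j (S k)) with false by (symmetry; apply Nat.leb_gt; lia).
        replace (Nat.eqb (S k) j) with false by (symmetry; apply Nat.eqb_neq; lia).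
        unfold indb. rewrite (u_S k). field. repeat split; lra.
Qed.

Lemma D_bound m' : Rabs (g (S (S m')) - g (S m')) <= (1 - / E) / lam.
Proof.
  pose proof E_pos as HE.
  set (w := u m'). set (s := Sp m'). set (r := INR (S m')).
  assert (Hw : 0 < w) by apply u_pos.
  assert (Hr : 0 < r) by (apply lt_0_INR; lia).
  assert (Hs : 1 <= s) by apply Sp_ge1.
  assert (Hum : u (S m') = w * lam / r) by (unfold w, r; rewrite u_S; field; apply not_0_INR; lia).
  assert (HSp : Sp (S m') = s + w * lam / r) by (unfold s; rewrite <- Hum; reflexivity).
  assert (H1 : lam * s <= r * (s + w * lam / r - 1)) by (rewrite <- HSp; apply L1).
  assert (H2 : (r - lam) * (E - s) <= lam * w).
  { unfold r, s, w. rewrite S_INR. apply tail. }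
  assert (H3 : s + w * lam / r <= E) by (rewrite <- HSp; apply Sp_le_E).
  destruct (stein_alg w lam r s E Hw Hlam Hr ltac:(lra) H1 H2 H3) as [P0 [Q0 [X0 [Y0 XY]]]].
  set (um := w * lam / r) in *.
  assert (Hump : 0 < um) by (unfold um; apply Rdiv_lt_0_compat; nra).
  assert (key : exists T, g (S (S m')) - g (S m') = T / (lam * E) /\ Rabs T <= E - 1).
  { unfold g. fold w s. rewrite Hum, HSp. fold um.
    destruct (lt_eq_lt_dec j m') as [[Hjk|Hjk]|Hjk].
    -
      replace (Nat.leb j (S m')) with true by (symmetry; apply Nat.leb_le; lia).
      replace (Nat.leb j m') with true by (symmetry; apply Nat.leb_le; lia).
      exists (- (u j * ((E - s) / w - (E - s - um) / um))). split.
      + unfold indb. field. repeat split; lra.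
      + assert (0 <= u j <= s) by (split; [left; apply u_pos| unfold s; apply u_le_Sp; lia]).
        rewrite Rabs_Ropp, Rabs_right by (apply Rle_ge, Rmult_le_pos; lra).
        assert (u j * ((E - s) / w - (E - s - um) / um) <= s * ((E - s) / w - (E - s - um) / um))
          by (apply Rmult_le_compat_r; lra). lra.
    - subst j. replace (Nat.leb m' (S m')) with true by (symmetry; apply Nat.leb_le; lia).
      replace (Nat.leb m' m') with true by (symmetry; apply Nat.leb_le; lia).
      exists (- (w * ((E - s) / w - (E - s - um) / um))). split.
      + fold w. unfold indb. field. repeat split; lra.
      + assert (w <= s) by (unfold s, w; apply u_le_Sp; lia).
        rewrite Rabs_Ropp, Rabs_right by (apply Rle_ge, Rmult_le_pos; lra).
        assert (w * ((E - s) / w - (E - s - um) / um) <= s * ((E - s) / w - (E - s - um) / um))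
          by (apply Rmult_le_compat_r; lra). lra.
    - destruct (Nat.eq_dec j (S m')) as [->|Hne].
      + rewrite Nat.leb_refl. replace (Nat.leb (S m') m') with false by (symmetry; apply Nat.leb_gt; lia).
        exists ((E - s - um) * ((s + um) / um - s / w) + s * ((E - s) / w - (E - s - um) / um)). split.
        * rewrite Hum. fold um. unfold indb. field. repeat split; lra.
        * rewrite Rabs_right by lra. lra.
      + replace (Nat.leb j (S m')) with false by (symmetry; apply Nat.leb_gt; lia).
        replace (Nat.leb j m') with false by (symmetry; apply Nat.leb_gt; lia).
        exists (- (u j * ((s + um) / um - s / w))). split.
        * unfold indb. field. repeat split; lra.
        * assert (0 <= u j <= E - s - um).
          { assert (u j <= E - Sp (S m')) by (apply u_le_tail; lia). rewrite HSp in H. split. left; apply u_pos. lra. }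
          rewrite Rabs_Ropp, Rabs_right by (apply Rle_ge, Rmult_le_pos; lra).
          assert (u j * ((s + um) / um - s / w) <= (E - s - um) * ((s + um) / um - s / w))
            by (apply Rmult_le_compat_r; lra). lra. }
  destruct key as [T [HT HTb]]. rewrite HT.
  unfold Rdiv. rewrite Rabs_mult, (Rabs_right (/ (lam * E))).
  2: { left; apply Rinv_0_lt_compat; nra. }
  replace ((1 - / E) * / lam) with ((E - 1) * / (lam * E)) by (field; lra).
  apply Rmult_le_compat_r. left; apply Rinv_0_lt_compat; nra. auto.
Qed.

End Pois.

Definition pois (x : R) (j : nat) : R := x ^ j / INR (fact j) * exp (- x).

Lemma Bin_pi0 N j : Bin 0 N j = if Nat.eqb j 0 then 1 else 0.
Proof.
  revert j; induction N; intro j; simpl. reflexivity.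
  destruct j. rewrite IHN. simpl. ring. rewrite !IHN. simpl. destruct j; simpl; ring.
Qed.

Lemma pois0 j : pois 0 j = if Nat.eqb j 0 then 1 else 0.
Proof. unfold pois. rewrite Ropp_0, exp_0. destruct j; simpl Nat.eqb; cbv iota. simpl. field. simpl pow. unfold Rdiv. rewrite Rmult_0_l. ring. Qed.

Theorem bin_pois pi N j : 0 <= pi <= 1 ->
  Rabs (Bin pi N j - pois (INR N * pi) j) <= Rmin (INR N * pi) 1 * pi.
Proof.
  intro hpi.
  destruct N as [|n].
  { simpl INR. rewrite Rmult_0_l, pois0. simpl Bin. rewrite Rminus_diag, Rabs_R0.
    rewrite Rmin_left by lra. lra. }
  destruct (Req_dec pi 0) as [->|Hpi0].
  { rewrite Rmult_0_r, pois0, Bin_pi0, Rminus_diag, Rabs_R0. rewrite Rmin_left by lra. lra. }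
  assert (Hpi : 0 < pi) by lra.
  set (lam := INR (S n) * pi).
  assert (Hlam : 0 < lam) by (unfold lam; apply Rmult_lt_0_compat; auto; apply lt_0_INR; lia).
  pose proof (exp_pos lam) as HE.
  assert (Hp : pois lam j = u lam j / exp lam).
  { unfold pois, u. rewrite exp_Ropp. unfold Rdiv. ring. }
  rewrite Hp.
  set (G := g lam j).
  assert (HS := Stein_Bin pi G n).
  rewrite (ssum_ext _ (fun k => Bin pi (S n) k * (u lam j / exp lam) + (-1) * (Bin pi (S n) k * indb (Nat.eqb k j)))) in HS.
  2: { intros k _. fold lam. unfold G. rewrite stein_eq by auto. ring. }
  rewrite ssum_plus, ssum_scal in HS.
  rewrite (ssum_ext _ (fun k => (u lam j / exp lam) * Bin pi (S n) k)) in HS by (intros; ring).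
  rewrite ssum_scal, Bin_sum in HS by (auto; lia).
  rewrite ssum_ind_pick in HS.
  2: { intros k Hk. apply Bin_zero. lia. }
  set (c := (1 - / exp lam) / lam).
  assert (Hsum : Rabs (ssum (fun k => Bin pi n k * (G (S k) - G (S (S k)))) (S n)) <= c).
  { eapply Rle_trans. apply ssum_abs.
    apply Rle_trans with (ssum (fun k => c * Bin pi n k) (S n)).
    - apply ssum_le. intros k _. rewrite Rabs_mult, (Rabs_right (Bin pi n k)).
      2: { apply Rle_ge; apply Bin_range; auto. }
      rewrite Rmult_comm. apply Rmult_le_compat_r. apply Bin_range; auto.
      rewrite Rabs_minus_sym. apply D_bound; auto.
    - rewrite ssum_scal, Bin_sum by (auto; lia). lra. }
  replace (Bin pi (S n) j - u lam j / exp lam) with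
     (- (INR (S n) * pi ^ 2 * ssum (fun k => Bin pi n k * (G (S k) - G (S (S k)))) (S n))) by lra.
  rewrite Rabs_Ropp, Rabs_mult.
  rewrite Rabs_right by (apply Rle_ge; apply Rmult_le_pos; [apply pos_INR| apply pow2_ge_0]).
  assert (Hc1 : 1 - / exp lam <= Rmin lam 1).
  { apply Rmin_glb. pose proof (exp_ineq1_le (- lam)). rewrite exp_Ropp in H. lra.
    pose proof (Rinv_0_lt_compat _ HE). lra. }
  apply Rle_trans with (INR (S n) * pi ^ 2 * c).
  { apply Rmult_le_compat_l; auto. apply Rmult_le_pos; [apply pos_INR| apply pow2_ge_0]. }
  unfold c. replace (INR (S n) * pi ^ 2 * ((1 - / exp lam) / lam)) with ((1 - / exp lam) * pi).
  2: { replace (INR (S n)) with (lam / pi) by (unfold lam; field; lra). field. lra. }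
  apply Rmult_le_compat_r; lra.
Qed.

Lemma Rdiv_le_0_compat a b : 0 <= a -> 0 < b -> 0 <= a / b.
Proof. intros; unfold Rdiv; apply Rmult_le_pos; auto; left; apply Rinv_0_lt_compat; auto. Qed.

Lemma pi_range (l : list nat) i : 0 <= INR (nth i l 0%nat) / INR (list_sum l) <= 1.
Proof.
  pose proof (nth_le_sum l i) as H.
  destruct (Nat.eq_dec (list_sum l) 0) as [H0|H0].
  - replace (nth i l 0%nat) with 0%nat by lia. simpl. unfold Rdiv. rewrite Rmult_0_l. lra.
  - assert (0 < INR (list_sum l)) by (apply lt_0_INR; lia).
    split. apply Rdiv_le_0_compat; auto. apply pos_INR.
    apply Rmult_le_reg_r with (INR (list_sum l)); auto. unfold Rdiv.
    rewrite Rmult_assoc, Rinv_l by lra. rewrite Rmult_1_r, Rmult_1_l. apply le_INR; auto.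
Qed.

Lemma pois_range x j : 0 <= x -> 0 <= pois x j <= 1.
Proof.
  intro Hx. destruct Hx as [Hx|<-].
  - assert (Hp : pois x j = u x j / exp x).
    { unfold pois, u. rewrite exp_Ropp. unfold Rdiv. ring. }
    rewrite Hp. pose proof (u_pos x Hx j). pose proof (exp_pos x).
    pose proof (u_le_Sp x Hx j j (Nat.le_refl _)). pose proof (Sp_le_E x Hx j).
    split. left; apply Rdiv_lt_0_compat; auto.
    apply Rmult_le_reg_r with (exp x); auto. unfold Rdiv. rewrite Rmult_assoc, Rinv_l by lra. lra.
  - rewrite pois0. destruct (Nat.eqb j 0); lra.
Qed.

Theorem mainTheorem2 (q : nat -> R) (K : nat) (p : R)
  (hq : is_pos_int_law q) (hK : (1 <= K)%nat) (hp : 0 < p < 1)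
  (hint : forall l : list nat, length l = K -> Forall (fun n => 0 < q n) l ->
          exists m : nat, p * INR (list_sum l) = INR m) :
  forall j : nat,
    Rabs (Eiid q K (EW_cond p j) / INR K - Qj q p j)
      <= Eiid q K (rhs_integrand p).
Proof.
  intro j. destruct hq as [qpos [q0 q1]].
  set (Bf := fun i l => Bin (INR (nth i l 0%nat) / INR (list_sum l)) (ndraws p l) j).
  set (Pf := fun i (l : list nat) => pois (p * INR (nth i l 0%nat)) j).
  set (GG := fun a s => Rmin (p * INR a) 1 * (INR a / INR s)).
  set (Gf := fun i (l : list nat) => GG (nth i l 0%nat) (list_sum l)).
  assert (HBb : forall i, lbnd (Bf i) 1).
  { intros i l. unfold Bf. pose proof (Bin_range _ (pi_range l i) (ndraws p l) j).
    rewrite Rabs_right; lra. }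
  assert (Hpois : forall n, Rabs (pois (p * INR n) j) <= 1).
  { intro n. assert (0 <= p * INR n) by (apply Rmult_le_pos; [lra| apply pos_INR]).
    pose proof (pois_range _ j H). rewrite Rabs_right; lra. }
  assert (HPb : forall i, lbnd (Pf i) 1).
  { intros i l. apply Hpois. }
  assert (HGG : forall a s, (a <= s)%nat -> Rabs (GG a s) <= 1).
  { intros a s Has. unfold GG.
    assert (0 <= Rmin (p * INR a) 1 <= 1).
    { split. apply Rmin_glb. apply Rmult_le_pos; [lra| apply pos_INR]. lra. apply Rmin_r. }
    assert (0 <= INR a / INR s <= 1).
    { destruct (Nat.eq_dec s 0). replace a with 0%nat by lia. simpl. unfold Rdiv; rewrite Rmult_0_l; lra.
      assert (0 < INR s) by (apply lt_0_INR; lia). split. apply Rdiv_le_0_compat; auto. apply pos_INR.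
      apply Rmult_le_reg_r with (INR s); auto. unfold Rdiv.
      rewrite Rmult_assoc, Rinv_l by lra. rewrite Rmult_1_r, Rmult_1_l. apply le_INR; auto. }
    rewrite Rabs_right by (apply Rle_ge, Rmult_le_pos; lra). nra. }
  assert (HGb : forall i, lbnd (Gf i) 1).
  { intros i l. apply HGG. apply nth_le_sum. }
  assert (Hpt : forall i l, supp q K l -> Rabs (Bf i l - Pf i l) <= Gf i l).
  { intros i l [Hl Hf]. destruct (hint l Hl Hf) as [m Hm].
    assert (Hnd : ndraws p l = m).
    { unfold ndraws. rewrite Hm, Int_part_INR. apply Nat2Z.id. }
    unfold Bf, Pf, Gf, GG. rewrite Hnd.
    destruct (Nat.eq_dec (list_sum l) 0) as [H0|H0].
    {
      pose proof (nth_le_sum l i). replace (nth i l 0%nat) with 0%nat by lia. simpl INR.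
      rewrite Rmult_0_r. unfold Rdiv. rewrite Rmult_0_l.
      assert (Hm0 : INR m = 0) by (rewrite <- Hm, H0; simpl; ring).
      replace (Bin (0 * / INR (list_sum l)) m j) with (Bin (INR m * 0) m j) by (f_equal; rewrite Hm0; ring).
      rewrite Rmult_0_r.
      rewrite Bin_pi0, pois0, Rminus_diag, Rabs_R0. lra. }
    assert (HV : 0 < INR (list_sum l)) by (apply lt_0_INR; lia).
    assert (Hlam : p * INR (nth i l 0%nat) = INR m * (INR (nth i l 0%nat) / INR (list_sum l))).
    { rewrite <- Hm. field. lra. }
    rewrite Hlam. apply bin_pois. apply pi_range. }
  assert (Hsum_pos : forall l, supp q K l -> (0 < list_sum l)%nat).
  { intros l [Hl Hf]. destruct l as [|a r]. simpl in Hl. lia.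
    inversion Hf; subst. simpl. destruct a. rewrite q0 in H1. lra. lia. }
  assert (HEW : Eiid q K (EW_cond p j) = ssum (fun i => Eiid q K (Bf i)) K).
  { rewrite (Eiid_ext q qpos K _ (fun l => ssum (fun i => Bf i l) K)).
    - apply (Eiid_ssum q qpos q1 K Bf 1); auto.
    - intros l Hs. rewrite EW_cond_Bin by auto. destruct Hs as [Hl _]. rewrite Hl. reflexivity. }
  assert (HQ : forall i, (i < K)%nat -> Qj q p j = Eiid q K (Pf i)).
  { intros i Hi. unfold Pf. symmetry.
    apply (Eiid_marg q q1 (fun n => pois (p * INR n) j) 1 Hpois K i Hi). }
  assert (HR : forall i, (i < K)%nat -> Eiid q K (Gf i) = Eiid q K (rhs_integrand p)).
  { intros i Hi. unfold Gf. rewrite (Eiid_sym q qpos q1 GG 1 K HGG i Hi). reflexivity. }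
  assert (Hterm : forall i, (i < K)%nat -> Rabs (Eiid q K (Bf i) - Qj q p j) <= Eiid q K (rhs_integrand p)).
  { intros i Hi. rewrite (HQ i Hi), <- (HR i Hi).
    rewrite <- (Eiid_minus q qpos q1 K _ _ 1 1) by auto.
    assert (Hb : lbnd (fun l => Bf i l - Pf i l) 2).
    { intro l. eapply Rle_trans. apply Rabs_triang. rewrite Rabs_Ropp. pose proof (HBb i l); pose proof (HPb i l). lra. }
    apply Rabs_le. split.
    - replace (- Eiid q K (Gf i)) with ((-1) * Eiid q K (Gf i)) by ring.
      rewrite <- (Eiid_scal q qpos q1 K _ (-1) 1) by auto.
      apply (Eiid_le q qpos q1 K _ _ (Rabs (-1) * 1) 2); auto. apply lbnd_scal; auto.
      intros l Hs. pose proof (Rabs_le_inv _ _ (Hpt i l Hs)). lra.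
    - apply (Eiid_le q qpos q1 K _ _ 2 1); auto.
      intros l Hs. pose proof (Rabs_le_inv _ _ (Hpt i l Hs)). lra. }
  rewrite HEW.
  assert (HKp : 0 < INR K) by (apply lt_0_INR; lia).
  replace (ssum (fun i => Eiid q K (Bf i)) K / INR K - Qj q p j) with
    (ssum (fun i => Eiid q K (Bf i) - Qj q p j) K / INR K).
  2: { rewrite (ssum_ext _ (fun i => Eiid q K (Bf i) + (-1) * Qj q p j)) by (intros; ring).
       rewrite ssum_plus, ssum_const. field. lra. }
  unfold Rdiv. rewrite Rabs_mult, (Rabs_right (/ INR K)) by (left; apply Rinv_0_lt_compat; auto).
  apply Rmult_le_reg_r with (INR K); auto.
  rewrite Rmult_assoc, Rinv_l, Rmult_1_r by lra.
  eapply Rle_trans. apply ssum_abs.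
  apply Rle_trans with (ssum (fun _ => Eiid q K (rhs_integrand p)) K).
  - apply ssum_le. intros i Hi. apply Hterm; auto.
  - rewrite ssum_const. lra.
Qed.
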